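(* Let $\mathbf M=(M,N)$ be a flag matroid of rank $(1,n-1)$ on $[n]$, and let $P_{\mathbf M}$ denote its polytope translated by $-(1,\dots,1)$. Then every subdivision of $P_{\mathbf M}$ induced by a valuated flag matroid with support $\mathbf M$ is induced by a hyperplane arrangement consisting of hyperplanes of the form $\{x\in\mathbb{R}^n:x_i=0\}$, i.e. there is a set $I\subseteq[n]$ such that the cells of the subdivision are exactly the nonempty sets of the form $P_{\mathbf M}\cap\bigcap_{i\in I}H_i$ with each $H_i$ one of $\{x_i\ge0\}$, $\{x_i\le0\}$, $\{x_i=0\}$.
   Context: A flag matroid $(M,N)$ of rank $(1,n-1)$ consists of a matroid $M$ of rank 1 and a matroid $N$ of rank $n-1$ on $[n]$ such that every flat of $M$ is a flat of $N$. Its polytope is $\operatorname{conv}\{e_i:\{i\}\text{ basis of }M\}+\operatorname{conv}\{e_B:B\text{ basis of }N\}$, where $e_B=\sum_{i\in B}e_i$; after translation by $-(1,\dots,1)$ its vertices have one coordinate $-1$, one coordinate $+1$, the rest $0$. A valuated flag matroid with support $\mathbf M$ is a pair $(\mu,\nu)$, $\mu:\binom{[n]}{1}\to\mathbb{R}\cup\{\infty\}$, $\nu:\binom{[n]}{n-1}\to\mathbb{R}\cup\{\infty\}$, finite exactly on the bases of $M$ resp. $N$, such that the minimum of $\mu(\{i\})+\nu([n]\setminus\{i\})$ over $i\in[n]$ is attained at least twice or is $\infty$. The subdivision it induces is the regular mixed subdivision whose cells are, for $x\in\mathbb{R}^n$, $\operatorname{conv}\{e_i:i\text{ minimizes }\mu(\{i\})-x_i\}+\operatorname{conv}\{e_B:B\text{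 minimizes }\nu(B)-x\cdot e_B\}$ (translated by $-(1,\dots,1)$). *)

(* Defs.v *)
From HB Require Import structures.
From mathcomp Require Import all_boot all_order all_algebra.
From mathcomp Require Import reals.
Set Implicit Arguments. Unset Strict Implicit. Unset Printing Implicit Defensive.
Import Order.TTheory GRing.Theory Num.Theory.
Local Open Scope ring_scope.

Section Matroids.
Variable n : nat.

Definition is_matroid (B : {set {set 'I_n}}) : Prop :=
  B != set0 /\
  forall B1 B2, B1 \in B -> B2 \in B -> forall x, x \in B1 :\: B2 ->
    exists2 y, y \in B2 :\: B1 & (y |: (B1 :\ x)) \in B.

Definition has_rank (B : {set {set 'I_n}}) (r : nat) : Prop :=
  forall X, X \in B -> #|X| = r.

Definition mrank (B : {set {set 'I_n}}) (A : {set 'I_n}) : nat :=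
  (\max_(X in B) #|A :&: X|)%N.

Definition is_flat (B : {set {set 'I_n}}) (F : {set 'I_n}) : Prop :=
  forall x, x \notin F -> (mrank B F < mrank B (x |: F))%N.

Definition flag_matroid (M N : {set {set 'I_n}}) : Prop :=
  [/\ is_matroid M, is_matroid N & forall F, is_flat M F -> is_flat N F].
End Matroids.

(* ---------- R cup {oo}, encoded as option R (None = oo) ---------- *)
Section Trop.
Variable R : numDomainType.

Definition ole (a b : option R) : bool :=
  match a, b with
  | _, None => true
  | None, Some _ => false
  | Some u, Some v => u <= v
  end.

Definition oadd (a b : option R) : option R :=
  match a, b with Some u, Some v => Some (u + v) | _, _ => None end.

Definition is_argmin (I : Type) (D : I -> Prop) (f : I -> option R) (a : I) : Prop :=
  D a /\ forall b, D b -> ole (f a) (f b).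
End Trop.

(* mu({i}) is written mu i; nu is defined on subsets, only (n-1)-subsets matter *)
Definition valuated_flag (R : numDomainType) (n : nat) (M N : {set {set 'I_n}})
    (mu : 'I_n -> option R) (nu : {set 'I_n} -> option R) : Prop :=
  [/\ (forall i, mu i <> None <-> [set i] \in M),
      (forall B : {set 'I_n}, #|B| = n.-1 -> (nu B <> None <-> B \in N)) &
      let s := fun i => oadd (mu i) (nu (~: [set i])) in
      (forall i, s i = None) \/
      exists i j, [/\ i != j, is_argmin (fun _ => True) s i
                            & is_argmin (fun _ => True) s j]].

Section Geometry.
Variables (R : realType) (n : nat).

Definition pset := ('I_n -> R) -> Prop.

Definition conv (I : finType) (A : I -> Prop) (f : I -> 'I_n -> R) : pset :=
  fun p => exists l : I -> R,
    [/\ forall k, 0 <= l k, forall k, ~ A k -> l k = 0,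
        \sum_k l k = 1 & forall t, p t = \sum_k l k * f k t].

Definition msum (X Y : pset) : pset :=
  fun p => exists u v, [/\ X u, Y v & forall t, p t = u t + v t].

Definition shift_m1 (X : pset) : pset := fun p => X (fun t => p t + 1).

Definition unitv (i : 'I_n) : 'I_n -> R := fun t => (t == i)%:R.
Definition setv (B : {set 'I_n}) : 'I_n -> R := fun t => (t \in B)%:R.
Definition dotv (x y : 'I_n -> R) : R := \sum_t x t * y t.

Definition flag_polytope (M N : {set {set 'I_n}}) : pset :=
  shift_m1 (msum (conv (fun i => [set i] \in M) unitv)
                 (conv (fun B => B \in N) setv)).

(* the cell of the induced regular mixed subdivision attached to x *)
Definition cell (mu : 'I_n -> option R) (nu : {set 'I_n} -> option R)
    (x : 'I_n -> R) : pset :=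
  shift_m1 (msum
    (conv (is_argmin (fun _ => True) (fun i => omap (fun u => u - x i) (mu i)))
          unitv)
    (conv (is_argmin (fun B : {set 'I_n} => #|B| = n.-1)
                     (fun B => omap (fun u => u - dotv x (setv B)) (nu B)))
          setv)).

Definition face (P F : pset) : Prop :=
  exists w : 'I_n -> R,
    F = fun p => P p /\ forall q, P q -> dotv w q <= dotv w p.
End Geometry.

Inductive hside := Hge | Hle | Heq.

Definition halfspace (R : realType) (n : nat) (s : hside) (i : 'I_n)
    (p : 'I_n -> R) : Prop :=
  match s with
  | Hge => 0 <= p i
  | Hle => p i <= 0
  | Heq => p i = 0
  end.

(* Main.v *)
Require Import Defs.
From HB Require Import structures.
From mathcomp Require Import all_boot all_order all_algebra.
From mathcomp Require Import reals.
From mathcomp Require Import ring lra.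
From Stdlib Require Import FunctionalExtensionality PropExtensionality Classical.
Set Implicit Arguments. Unset Strict Implicit. Unset Printing Implicit Defensive.
Import Order.TTheory GRing.Theory Num.Theory.
Local Open Scope ring_scope.

Section Aux.
Variables (R : realType) (n : nat).

Definition simp (A : {set 'I_n}) (a : 'I_n -> R) : Prop :=
  [/\ forall i, 0 <= a i, forall i, i \notin A -> a i = 0 & \sum_i a i = 1].

Definition DD (A C : {set 'I_n}) : pset R n := fun p =>
  exists a c, [/\ simp A a, simp C c & forall t, p t = a t - c t].

Lemma pset_ext (X Y : pset R n) : (forall p, X p <-> Y p) -> X = Y.
Proof.
move=> h; apply: functional_extensionality => p.
by apply: propositional_extensionality.
Qed.

Lemma sum_delta (F : 'I_n -> R) t : \sum_k F k * (t == k)%:R = F t.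
Proof.
rewrite (bigD1 t) //= eqxx mulr1 big1 ?addr0 // => k /negPf.
by rewrite eq_sym => ->; rewrite mulr0.
Qed.

Lemma conv_unitv (P : 'I_n -> Prop) (A : {set 'I_n}) :
  (forall i, P i <-> i \in A) -> forall u, conv P (@unitv R n) u <-> simp A u.
Proof.
move=> hP u; split.
  case=> l [l0 lA l1 lu].
  have ue : forall t, u t = l t by move=> t; rewrite lu; exact: sum_delta.
  split=> [i|i iA|]; rewrite ?ue //.
    by apply: lA => /hP; rewrite (negPf iA).
  by rewrite (eq_bigr l) // => i _; rewrite ue.
case=> u0 uA u1; exists u; split=> // [k nk|t].
  by apply: uA; apply/negP => /hP.
by rewrite /unitv sum_delta.
Qed.

Lemma simp_nonempty (A : {set 'I_n}) a : simp A a -> exists i, i \in A.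
Proof.
case=> _ hA h1; apply/existsP; apply: contraT; rewrite negb_exists => /forallP h.
move: h1; rewrite big1 => [/eqP|i _]; first by rewrite eq_sym oner_eq0.
by apply: hA; exact: h.
Qed.

Lemma DD_nonempty (A C : {set 'I_n}) p : DD A C p -> (exists i, i \in A) /\ (exists j, j \in C).
Proof. by case=> a [c [ha hc _]]; split; [exact: simp_nonempty ha|exact: simp_nonempty hc]. Qed.

Lemma simp_delta (A : {set 'I_n}) i : i \in A -> simp A (fun t => (t == i)%:R).
Proof.
move=> iA; split=> [t|t tA|]; first by rewrite ler0n.
  by case: eqP tA => // ->; rewrite iA.
by rewrite (bigD1 i) //= eqxx big1 ?addr0 // => k /negPf ->.
Qed.

Lemma DD_point (A C : {set 'I_n}) i j : i \in A -> j \in C -> DD A C (fun t => (t == i)%:R - (t == j)%:R).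
Proof. by move=> iA jC; exists (fun t => (t == i)%:R), (fun t => (t == j)%:R); split => //; apply: simp_delta. Qed.

End Aux.

Section Aux2.
Variables (R : realType) (n : nat).

Lemma sum_delta_gen (T : finType) (F : T -> R) t : \sum_k (k == t)%:R * F k = F t.
Proof.
rewrite (bigD1 t) //= eqxx mul1r big1 ?addr0 // => k /negPf ->.
by rewrite mul0r.
Qed.

Lemma compl1_inj : injective (fun j : 'I_n => ~:[set j]).
Proof. by move=> i j /setC_inj /set1_inj. Qed.

Lemma sum_compl (l F : {set 'I_n} -> R) :
  (forall B, l B != 0 -> exists j, B = ~:[set j]) ->
  \sum_B l B * F B = \sum_j l (~:[set j]) * F (~:[set j]).
Proof.
move=> hl.
set img := [set ~:[set j] | j in [set: 'I_n]].
rewrite (bigID (fun B => B \in img)) /= [X in _ + X]big1 ?addr0.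
  rewrite (big_imset (fun B => l B * F B)); last by move=> i j _ _; apply: compl1_inj.
  by apply: eq_bigl => j; rewrite in_setT.
move=> B nB; have [->|/hl [j eB]] := eqVneq (l B) 0; first by rewrite mul0r.
by move: nB; rewrite eB; case/negP; apply/imsetP; exists j; rewrite ?in_setT.
Qed.

Lemma sum_lift (c : 'I_n -> R) (F : {set 'I_n} -> R) :
  \sum_B (\sum_j (B == ~:[set j])%:R * c j) * F B = \sum_j c j * F (~:[set j]).
Proof.
under eq_bigr do rewrite mulr_suml.
rewrite exchange_big /=; apply: eq_bigr => j _.
rewrite -(sum_delta_gen (fun B => c j * F B)); apply: eq_bigr => B _.
by rewrite mulrA.
Qed.

Lemma sum_setv (c : 'I_n -> R) t :
  \sum_j c j * setv R (~:[set j]) t = \sum_j c j - c t.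
Proof.
have -> : \sum_j c j * setv R (~:[set j]) t = \sum_j (c j - c j * (t == j)%:R).
  apply: eq_bigr => j _; rewrite /setv in_setC1.
  by case: eqP => _ /=; rewrite ?mulr1 ?mulr0 ?subr0 ?subrr.
by rewrite sumrB; congr (_ - _); rewrite -[RHS](sum_delta_gen c t);
   apply: eq_bigr => j _; rewrite mulrC eq_sym.
Qed.

Lemma conv_setv (P : {set 'I_n} -> Prop) (C : {set 'I_n}) :
  (forall B, P B -> exists j, B = ~:[set j]) ->
  (forall j, P (~:[set j]) <-> j \in C) ->
  forall v, conv P (@setv R n) v <-> exists c, simp C c /\ forall t, v t = 1 - c t.
Proof.
move=> hB hC v; split.
  case=> l [l0 lP l1 lv].
  have hl : forall B, l B != 0 -> exists j, B = ~:[set j].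
    move=> B nB; apply: hB; apply: Classical_Prop.NNPP => nP.
    by move: nB; rewrite lP // eqxx.
  have e1 : \sum_B l B = \sum_j l (~:[set j]).
    transitivity (\sum_B l B * 1); first by apply: eq_bigr => B _; rewrite mulr1.
    by rewrite (sum_compl _ hl); apply: eq_bigr => j _; rewrite mulr1.
  exists (fun j => l (~:[set j])); split.
    split=> // [j jC|]; last by rewrite -e1.
    by apply: lP => /hC; rewrite (negPf jC).
  by move=> t; rewrite lv (sum_compl _ hl) sum_setv -e1 l1.
case=> c [[c0 cC c1] vc].
exists (fun B => \sum_j (B == ~:[set j])%:R * c j); split.
- by move=> B; apply: sumr_ge0 => j _; apply: mulr_ge0 => //; rewrite ler0n.
- move=> B nP; apply: big1 => j _; case: eqP => [eB|]; last by rewrite mul0r.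
  rewrite cC ?mulr0 //; apply/negP => /hC; rewrite -eB => //.
- transitivity (\sum_B (\sum_j (B == ~:[set j])%:R * c j) * 1).
    by apply: eq_bigr => B _; rewrite mulr1.
  by rewrite sum_lift -[in RHS]c1; apply: eq_bigr => j _; rewrite mulr1.
- by move=> t; rewrite vc sum_lift sum_setv c1.
Qed.

End Aux2.

Section Aux3.
Variables (R : realType) (n : nat).

Lemma shift_DD (P1 : 'I_n -> Prop) (P2 : {set 'I_n} -> Prop) (A C : {set 'I_n}) :
  (forall i, P1 i <-> i \in A) -> (forall B, P2 B -> exists j, B = ~:[set j]) ->
  (forall j, P2 (~:[set j]) <-> j \in C) ->
  shift_m1 (msum (conv P1 (@unitv R n)) (conv P2 (@setv R n))) = DD A C.
Proof.
move=> h1 h2 h3; apply: pset_ext => p; rewrite /shift_m1 /msum; split.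
  case=> u [v [/(conv_unitv h1) hu /(conv_setv h2 h3) [c [hc vc]] e]].
  exists u, c; split => // t; have := e t; rewrite vc => et; lra.
case=> a [c [ha hc e]]; exists a, (fun t => 1 - c t); split.
- exact/(conv_unitv h1).
- by apply/(conv_setv h2 h3); exists c.
- by move=> t; rewrite e; ring.
Qed.

Lemma card_compl1 (B : {set 'I_n}) : (0 < n)%N -> #|B| = n.-1 -> exists j, B = ~:[set j].
Proof.
move=> n0 cB.
have : #|~: B| == 1%N.
  rewrite cardsCs setCK card_ord cB; apply/eqP.
  by case: (n) n0 => // m _; rewrite subSn // subnn.
by case/cards1P => j hj; exists j; rewrite -hj setCK.
Qed.

Lemma card_compl1' (j : 'I_n) : #|~:[set j]| = n.-1.
Proof. by rewrite cardsC1 card_ord. Qed.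

Lemma polytope_DD (M N : {set {set 'I_n}}) : (0 < n)%N -> has_rank N n.-1 ->
  @flag_polytope R n M N = DD [set i | [set i] \in M] [set j | ~:[set j] \in N].
Proof.
move=> n0 hN; apply: shift_DD.
- by move=> i; rewrite inE.
- by move=> B /hN; apply: card_compl1.
- by move=> j; rewrite inE.
Qed.

Definition fx (mu : 'I_n -> option R) (x : 'I_n -> R) i := omap (fun u => u - x i) (mu i).
Definition gx (nu : {set 'I_n} -> option R) (x : 'I_n -> R) B :=
  omap (fun u => u - dotv x (setv R B)) (nu B).
Definition Ax mu x := [set i | [forall b, ole (fx mu x i) (fx mu x b)]].
Definition Cx nu x := [set j | [forall b : 'I_n, ole (gx nu x (~:[set j])) (gx nu x (~:[set b]))]].

Lemma cell_DD mu nu x : (0 < n)%N -> cell mu nu x = DD (Ax mu x) (Cx nu x).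
Proof.
move=> n0; apply: shift_DD.
- move=> i; rewrite inE; split; first by case=> _ h; apply/forallP => b; exact: h.
  by move/forallP => h; split => // b _; exact: h.
- by move=> B [cB _]; apply: card_compl1.
- move=> j; rewrite inE; split.
    by case=> _ h; apply/forallP => b; apply: h; apply: card_compl1'.
  move/forallP => h; split; first exact: card_compl1'.
  by move=> B /(card_compl1 n0) [b ->]; exact: h.
Qed.

End Aux3.

Definition notge (h : hside) := match h with Hge => false | _ => true end.
Definition notle (h : hside) := match h with Hle => false | _ => true end.

Section Aux4.
Variables (R : realType) (n : nat).

Definition sgn (E : {set 'I_n}) (s : 'I_n -> hside) : pset R n :=
  fun p => forall i, i \in E -> halfspace (s i) i p.

Definition rmA (E : {set 'I_n}) s := [set i in E | notge (s i)].
Definition rmC (E : {set 'I_n}) s := [set i in E | notle (s i)].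

Lemma sgn_le E s (p : 'I_n -> R) i : sgn E s p -> i \in rmA E s -> p i <= 0.
Proof. by move=> h; rewrite inE => /andP [iE]; move: (h i iE); case: (s i) => //= ->. Qed.

Lemma sgn_ge E s (p : 'I_n -> R) i : sgn E s p -> i \in rmC E s -> 0 <= p i.
Proof. by move=> h; rewrite inE => /andP [iE]; move: (h i iE); case: (s i) => //= ->. Qed.

Lemma DD_sign (A C E : {set 'I_n}) s :
  (A :&: C = set0 \/ exists2 k, k \in A :&: C & k \notin E) ->
  (fun p => @DD R n A C p /\ sgn E s p) = DD (A :\: rmA E s) (C :\: rmC E s).
Proof.
move=> hAC; apply: pset_ext => p; split; last first.
  case=> a [c [[a0 aA a1] [c0 cC c1] e]]; split.
    exists a, c; split=> //.
      by split=> // i iA; apply: aA; rewrite inE negb_and iA orbT.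
    by split=> // i iC; apply: cC; rewrite inE negb_and iC orbT.
  move=> i iE; rewrite /halfspace e.
  have hA : notge (s i) -> a i = 0 by move=> h; apply: aA; rewrite !inE iE h.
  have hC : notle (s i) -> c i = 0 by move=> h; apply: cC; rewrite !inE iE h.
  case: (s i) hA hC => /= hA hC.
  - by rewrite hC // subr0.
  - by rewrite hA // sub0r oppr_le0.
  - by rewrite hA // hC // subrr.
case=> [[a [c [[a0 aA a1] [c0 cC c1] e]]] hs].
have hmin : forall i, i \in E -> 0 <= Num.min (a i) (c i).
  by move=> i _; rewrite le_min a0 c0.
case: hAC => [AC0|[k kAC kE]].
  have dis : forall i, a i = 0 \/ c i = 0.
    move=> i; case: (boolP (i \in A)) => iA; last by left; apply: aA.
    right; apply: cC; apply/negP => iC.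
    have : i \in A :&: C by rewrite inE iA iC.
    by rewrite AC0 inE.
  exists a, c; split=> //.
    split=> // i; rewrite inE negb_and negbK => /orP [iE|]; last exact: aA.
    have := sgn_le hs iE; rewrite e; case: (dis i) => ->; rewrite ?sub0r ?subr0 //.
    by move=> ai; apply/eqP; rewrite eq_le ai a0.
  split=> // i; rewrite inE negb_and negbK => /orP [iE|]; last exact: cC.
  have := sgn_ge hs iE; rewrite e; case: (dis i) => ->; rewrite ?sub0r ?subr0 //.
  by rewrite oppr_ge0 => ci; apply/eqP; rewrite eq_le ci c0.
set t := fun i => if i \in E then Num.min (a i) (c i) else 0.
set T := \sum_i t i.
have t0 : forall i, 0 <= t i by move=> i; rewrite /t; case: ifP => // /hmin.
have T0 : 0 <= T by apply: sumr_ge0.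
have tk : t k = 0 by rewrite /t (negPf kE).
move: kAC; rewrite inE => /andP [kA kC].
exists (fun i => a i - t i + (i == k)%:R * T), (fun i => c i - t i + (i == k)%:R * T).
split.
- split.
  + move=> i; case: (eqVneq i k) => [->|nik]; first by rewrite tk subr0 mul1r addr_ge0.
    rewrite mul0r addr0 subr_ge0 /t; case: ifP => _; [by rewrite ge_min lexx|exact: a0].
  + move=> i; rewrite inE negb_and negbK => /orP [iE|iA].
    * have ik : i != k by apply: contraNneq kE => <-; move: iE; rewrite inE => /andP [].
      rewrite (negPf ik) mul0r addr0 /t.
      have iE' : i \in E by move: iE; rewrite inE => /andP [].
      rewrite iE'; have := sgn_le hs iE; rewrite e subr_le0 => le_ac.
      by rewrite min_l // subrr.
    * have ik : i != k by apply: contraNneq iA => ->.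
      rewrite (negPf ik) mul0r addr0 /t aA //; case: ifP => _; last by rewrite subr0.
      by rewrite min_l ?c0 // subrr.
  + rewrite big_split /= sumrB a1 sum_delta_gen /T; ring.
- split.
  + move=> i; case: (eqVneq i k) => [->|nik]; first by rewrite tk subr0 mul1r addr_ge0.
    rewrite mul0r addr0 subr_ge0 /t; case: ifP => _; [by rewrite ge_min lexx orbT|exact: c0].
  + move=> i; rewrite inE negb_and negbK => /orP [iE|iC].
    * have ik : i != k by apply: contraNneq kE => <-; move: iE; rewrite inE => /andP [].
      rewrite (negPf ik) mul0r addr0 /t.
      have iE' : i \in E by move: iE; rewrite inE => /andP [].
      rewrite iE'; have := sgn_ge hs iE; rewrite e subr_ge0 => le_ca.
      by rewrite min_r // subrr.
    * have ik : i != k by apply: contraNneq iC => ->.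
      rewrite (negPf ik) mul0r addr0 /t cC //; case: ifP => _; last by rewrite subr0.
      by rewrite min_r ?a0 // subrr.
  + rewrite big_split /= sumrB c1 sum_delta_gen /T; ring.
- by move=> i; rewrite e; ring.
Qed.

End Aux4.

Section Aux5.
Variables (R : realType) (n : nat).
Implicit Types (A C : {set 'I_n}) (a c w p : 'I_n -> R).

Lemma exists_argmax A w : (exists i, i \in A) ->
  exists2 i, i \in A & forall k, k \in A -> w k <= w i.
Proof.
case=> i0 i0A; case: (arg_maxP w (P := mem A) i0A) => i iA h.
by exists i => // k kA; exact: h.
Qed.

Lemma exists_argmin A w : (exists i, i \in A) ->
  exists2 i, i \in A & forall k, k \in A -> w i <= w k.
Proof.
case=> i0 i0A; case: (arg_minP w (P := mem A) i0A) => i iA h.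
by exists i => // k kA; exact: h.
Qed.

Lemma dotv_sub w a c p : (forall t, p t = a t - c t) ->
  dotv w p = \sum_t w t * a t - \sum_t w t * c t.
Proof. by move=> e; rewrite /dotv -sumrB; apply: eq_bigr => t _; rewrite e mulrBr. Qed.

Lemma simp_sub A (B : {set 'I_n}) a : simp A a -> A \subset B -> simp B a.
Proof.
case=> a0 aA a1 sAB; split=> // i iB; apply: aA.
by apply: contra iB; apply: (subsetP sAB).
Qed.

Lemma simp_le A a w M : simp A a -> (forall i, i \in A -> w i <= M) ->
  \sum_i w i * a i <= M.
Proof.
case=> a0 aA a1 hw; rewrite -[M]mulr1 -a1 mulr_sumr; apply: ler_sum => i _.
case: (boolP (i \in A)) => iA; last by rewrite aA // !mulr0.
by apply: ler_wpM2r => //; apply: hw.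
Qed.

Lemma simp_ge A a w m : simp A a -> (forall i, i \in A -> m <= w i) ->
  m <= \sum_i w i * a i.
Proof.
case=> a0 aA a1 hw; rewrite -[m]mulr1 -a1 mulr_sumr; apply: ler_sum => i _.
case: (boolP (i \in A)) => iA; last by rewrite aA // !mulr0.
by apply: ler_wpM2r => //; apply: hw.
Qed.

Lemma simp_eq_le A a w M : simp A a -> (forall i, i \in A -> w i <= M) ->
  \sum_i w i * a i = M -> forall i, a i != 0 -> w i = M.
Proof.
case=> a0 aA a1 hw e.
have s0 : \sum_i (M - w i) * a i = 0.
  under eq_bigr do rewrite mulrBl.
  by rewrite sumrB -mulr_sumr a1 mulr1 e subrr.
move=> i ai.
have /(_ i isT) : forall k, true -> (M - w k) * a k = 0.
  apply: (psumr_eq0P _ s0) => k _.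
  case: (boolP (k \in A)) => kA; last by rewrite aA // mulr0.
  by apply: mulr_ge0 => //; rewrite subr_ge0 hw.
move=> /eqP; rewrite mulf_eq0 (negPf ai) orbF subr_eq0 => /eqP ->.
done.
Qed.

Lemma simp_eq_ge A a w m : simp A a -> (forall i, i \in A -> m <= w i) ->
  \sum_i w i * a i = m -> forall i, a i != 0 -> w i = m.
Proof.
move=> ha hw e i ai.
have h := @simp_eq_le A a (fun k => - w k) (- m) ha.
apply: oppr_inj; apply: h ai => [k kA|]; first by rewrite lerN2 hw.
by under eq_bigr do rewrite mulNr; rewrite sumrN e.
Qed.

End Aux5.

Section Aux6.
Variables (R : realType) (n : nat).
Implicit Types (A C : {set 'I_n}) (a c w p : 'I_n -> R).

Definition amax A w := [set i in A | [forall k in A, w k <= w i]].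
Definition amin C w := [set j in C | [forall k in C, w j <= w k]].

Lemma sum_delta_r (F : 'I_n -> R) t : \sum_k F k * (k == t)%:R = F t.
Proof. by rewrite -(sum_delta F t); apply: eq_bigr => k _; rewrite eq_sym. Qed.

Lemma face_DD A C w : (exists i, i \in A) -> (exists j, j \in C) ->
  (fun p => @DD R n A C p /\ forall q, DD A C q -> dotv w q <= dotv w p)
  = DD (amax A w) (amin C w).
Proof.
move=> hA hC; have [im imA him] := exists_argmax w hA.
have [jm jmC hjm] := exists_argmin w hC.
have amaxE : forall i, (i \in amax A w) = (i \in A) && (w i == w im).
  move=> i; rewrite inE; case: (boolP (i \in A)) => iA //=.
  apply/forall_inP/eqP.
    by move=> h; apply/eqP; rewrite eq_le him //= h.
  by move=> -> k; apply: him.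
have aminE : forall j, (j \in amin C w) = (j \in C) && (w j == w jm).
  move=> j; rewrite inE; case: (boolP (j \in C)) => jC //=.
  apply/forall_inP/eqP.
    by move=> h; apply/eqP; rewrite eq_le hjm //= h.
  by move=> -> k; apply: hjm.
apply: pset_ext => p; split.
  case=> [[a [c [ha hc e]]] hmax].
  have := hmax _ (@DD_point R n A C im jm imA jmC).
  rewrite (dotv_sub w e) (@dotv_sub R n w (fun t => (t == im)%:R) (fun t => (t == jm)%:R) _) //.
  rewrite !sum_delta_r => hle.
  have h1 := simp_le ha him; have h2 := simp_ge hc hjm.
  have ea : \sum_i w i * a i = w im by lra.
  have ec : \sum_i w i * c i = w jm by lra.
  case: ha => [a0 aA a1]; case: hc => [c0 cC c1].
  exists a, c; split => //.
    split=> // i ni; apply/eqP; apply: contraNT ni => ai.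
    have iA : i \in A by apply: contraNT ai => /aA ->.
    by rewrite amaxE iA (simp_eq_le (And3 a0 aA a1) him ea ai) eqxx.
  split=> // j nj; apply/eqP; apply: contraNT nj => cj.
  have jC : j \in C by apply: contraNT cj => /cC ->.
  by rewrite aminE jC (simp_eq_ge (And3 c0 cC c1) hjm ec cj) eqxx.
case=> a [c [ha hc e]]; split.
  exists a, c; split => //.
    by apply: (simp_sub ha); apply/subsetP => i; rewrite amaxE => /andP [].
  by apply: (simp_sub hc); apply/subsetP => i; rewrite aminE => /andP [].
move=> q [a' [c' [ha' hc' e']]].
rewrite (dotv_sub w e') (dotv_sub w e).
have h1 := simp_le ha' him; have h2 := simp_ge hc' hjm.
have h3 : w im <= \sum_i w i * a i.
  by apply: (simp_ge ha) => i; rewrite amaxE => /andP [_ /eqP ->].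
have h4 : \sum_i w i * c i <= w jm.
  by apply: (simp_le hc) => i; rewrite aminE => /andP [_ /eqP ->].
lra.
Qed.

End Aux6.

Section Aux7.
Variables (R : realType) (n : nat) (mu : 'I_n -> option R) (nu : {set 'I_n} -> option R).

Definition al i := odflt 0 (mu i).
Definition be j := odflt 0 (nu (~:[set j])).
Definition Sv := [set i | mu i != None].
Definition Tv := [set j | nu (~:[set j]) != None].
Definition Uv := Sv :&: Tv.
Definition wv k := al k + be k.

Lemma dotv_compl (x : 'I_n -> R) j : dotv x (setv R (~:[set j])) = \sum_t x t - x j.
Proof.
rewrite /dotv -(sum_delta_r x j) -sumrB; apply: eq_bigr => t _.
by rewrite /setv in_setC1; case: eqP => _ /=; rewrite ?mulr1 ?mulr0 ?subr0 ?subrr.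
Qed.

Lemma Ax_char x i : (exists i0, i0 \in Sv) ->
  i \in Ax mu x <-> i \in Sv /\ forall b, b \in Sv -> al i - x i <= al b - x b.
Proof.
case=> i0; rewrite /Ax /Sv /al /fx !inE => hi0; split.
  move/forallP => h; case E: (mu i) => [ui|]; last first.
    by move: (h i0); rewrite E /=; case: (mu i0) hi0.
  split=> // b; rewrite inE; move: (h b); rewrite E /=; case: (mu b) => [ub h1 _|].
    exact: h1.
  by move=> _ H; rewrite eqxx in H.
case=> hi h; apply/forallP => b; move: (h b); rewrite inE; move: hi.
case: (mu i) => //= ui _; case: (mu b) => [ub h'|_] //=; exact: h'.
Qed.

Lemma Cx_char x j : (exists j0, j0 \in Tv) ->
  j \in Cx nu x <-> j \in Tv /\ forall b, b \in Tv -> be j + x j <= be b + x b.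
Proof.
case=> j0; rewrite /Cx /Tv /be /gx !inE !dotv_compl => hj0.
have key : forall u v : R, forall b,
    (u - (\sum_t x t - x j) <= v - (\sum_t x t - x b)) = (u + x j <= v + x b).
  by move=> u v b; apply/idP/idP => h; lra.
split.
  move/forallP => h; case E: (nu (~:[set j])) => [uj|]; last first.
    by move: (h j0); rewrite E /=; case: (nu (~:[set j0])) hj0.
  split=> // b; rewrite inE; move: (h b); rewrite E /= !dotv_compl; case: (nu (~:[set b])) => [ub h1 _|].
    by rewrite -key.
  by move=> _ H; rewrite eqxx in H.
case=> hj h; apply/forallP => b; move: (h b); rewrite inE; move: hj; rewrite !dotv_compl.
case: (nu (~:[set j])) => //= uj _; case: (nu (~:[set b])) => [ub h'|_] //=; rewrite key; exact: h'.
Qed.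


Lemma Ax_sub x : (exists i0, i0 \in Sv) -> Ax mu x \subset Sv.
Proof. by move=> h; apply/subsetP => i /(Ax_char _ _ h) []. Qed.

Lemma Cx_sub x : (exists j0, j0 \in Tv) -> Cx nu x \subset Tv.
Proof. by move=> h; apply/subsetP => i /(Cx_char _ _ h) []. Qed.

Lemma Ax_ne x : (exists i0, i0 \in Sv) -> exists i, i \in Ax mu x.
Proof.
move=> h; have [i iS hi] := exists_argmin (fun i => al i - x i) h.
by exists i; apply/(Ax_char _ _ h); split.
Qed.

Lemma Cx_ne x : (exists j0, j0 \in Tv) -> exists j, j \in Cx nu x.
Proof.
move=> h; have [i iS hi] := exists_argmin (fun i => be i + x i) h.
by exists i; apply/(Cx_char _ _ h); split.
Qed.

Lemma realize_inv x : (exists i0, i0 \in Sv) -> (exists j0, j0 \in Tv) ->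
  exists g, (forall i, i \in Uv -> g <= wv i) /\
            Ax mu x :&: Cx nu x = [set i in Uv | wv i == g].
Proof.
move=> hS hT; have [a aA] := Ax_ne x hS; have [c cC] := Cx_ne x hT.
have [aS ha] := (Ax_char _ _ hS).1 aA; have [cT hc] := (Cx_char _ _ hT).1 cC.
exists ((al a - x a) + (be c + x c)); split.
  move=> k; rewrite inE => /andP [kS kT].
  have := ha k kS; have := hc k kT; rewrite /wv; lra.
apply/setP => k; apply/idP/idP.
  case/setIP => /(Ax_char _ _ hS) [kS hk] /(Cx_char _ _ hT) [kT hk'].
  rewrite inE; apply/andP; split; first by rewrite inE kS kT.
  apply/eqP.
  have := ha k kS; have := hk a aS; have := hc k kT; have := hk' c cT; rewrite /wv; lra.
rewrite inE => /andP [kU /eqP e]; move: kU; rewrite inE => /andP [kS kT].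
have h1 := ha k kS; have h2 := hc k kT.
have e1 : al k - x k = al a - x a by move: e; rewrite /wv; lra.
have e2 : be k + x k = be c + x c by move: e; rewrite /wv; lra.
apply/setIP; split.
  apply/(Ax_char _ _ hS); split=> // b bS; rewrite e1; exact: ha.
apply/(Cx_char _ _ hT); split=> // b bT; rewrite e2; exact: hc.
Qed.

Lemma realize (A C : {set 'I_n}) g :
  A \subset Sv -> C \subset Tv -> (exists a, a \in A) -> (exists c, c \in C) ->
  (forall i, i \in Uv -> g <= wv i) -> A :&: C = [set i in Uv | wv i == g] ->
  exists x, Ax mu x = A /\ Cx nu x = C.
Proof.
move=> sA sC [a0 a0A] [c0 c0C] hg hAC.
have hS : exists i0, i0 \in Sv by exists a0; exact: (subsetP sA).
have hT : exists j0, j0 \in Tv by exists c0; exact: (subsetP sC).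
have eAC : forall i, (i \in A) && (i \in C) = (i \in Uv) && (wv i == g).
  by move=> i; rewrite -in_setI hAC inE.
have Ui : forall i, i \in Sv -> i \in Tv -> i \in Uv by move=> i ? ?; rewrite inE; apply/andP.
have ne : forall i, i \in Uv -> ~~ ((i \in A) && (i \in C)) -> g < wv i.
  move=> i iU; rewrite eAC iU /= => ne; rewrite lt_neqAle hg // andbT.
  by rewrite eq_sym.
set x := fun i => if i \in A then al i else if i \in C then g - be i
  else if i \in Sv then (if i \in Tv then (al i + g - be i) / 2 else al i - 1)
  else g - be i + 1.
have K1 : forall i, i \in Sv -> (i \in A -> al i - x i = 0) /\ (i \notin A -> 0 < al i - x i).
  move=> i iS; rewrite /x; case: (boolP (i \in A)) => iA; first by split=> [_|/negP //]; rewrite subrr.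
  split=> // _; case: (boolP (i \in C)) => iC.
    have iU : i \in Uv by apply: Ui => //; exact: (subsetP sC).
    have := ne i iU; rewrite (negPf iA) /= => /(_ isT); rewrite /wv; lra.
  rewrite iS; case: (boolP (i \in Tv)) => iT; last lra.
  have := ne i (Ui i iS iT); rewrite (negPf iA) /= => /(_ isT); rewrite /wv; lra.
have K2 : forall j, j \in Tv -> (j \in C -> be j + x j = g) /\ (j \notin C -> g < be j + x j).
  move=> j jT; rewrite /x; case: (boolP (j \in A)) => jA.
    have jU : j \in Uv by apply: Ui => //; exact: (subsetP sA).
    split=> jC.
      by have := eAC j; rewrite jA jC jU /= => /esym /eqP <-; rewrite /wv addrC.
    by have := ne j jU; rewrite jA (negPf jC) /= => /(_ isT); rewrite /wv addrC.
  case: (boolP (j \in C)) => jC; first by split=> [_|/negP //]; rewrite addrC subrK.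
  split=> // _; case: (boolP (j \in Sv)) => jS.
    have := ne j (Ui j jS jT); rewrite (negPf jA) /= => /(_ isT); rewrite jT /wv; lra.
  lra.
exists x; split; apply/setP => i; apply/idP/idP.
- case/(Ax_char _ _ hS) => iS hi; apply: contraT => iA.
  have [_ /(_ iA) h1] := K1 i iS; have [/(_ a0A) h2 _] := K1 a0 (subsetP sA _ a0A).
  have := hi a0 (subsetP sA _ a0A); lra.
- move=> iA; have iS := subsetP sA _ iA; apply/(Ax_char _ _ hS); split=> // b bS.
  have [/(_ iA) h1 _] := K1 i iS; have [hb1 hb2] := K1 b bS.
  case: (boolP (b \in A)) => bA; [have := hb1 bA | have := hb2 bA]; lra.
- case/(Cx_char _ _ hT) => iT hi; apply: contraT => iC.
  have [_ /(_ iC) h1] := K2 i iT; have [/(_ c0C) h2 _] := K2 c0 (subsetP sC _ c0C).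
  have := hi c0 (subsetP sC _ c0C); lra.
- move=> iC; have iT := subsetP sC _ iC; apply/(Cx_char _ _ hT); split=> // b bT.
  have [/(_ iC) h1 _] := K2 i iT; have [hb1 hb2] := K2 b bT.
  case: (boolP (b \in C)) => bC; [have := hb1 bC | have := hb2 bC]; lra.
Qed.

End Aux7.

Section Aux9.
Variables (R : realType) (n : nat).
Implicit Types (A C : {set 'I_n}) (w : 'I_n -> R).

Lemma amax_ind (A0 B : {set 'I_n}) w M : (exists b, b \in B) -> B \subset A0 ->
  (forall i, i \in A0 -> i \in B -> w i = M) ->
  (forall i, i \in A0 -> i \notin B -> w i < M) -> amax A0 w = B.
Proof.
move=> [b bB] sB h1 h2; apply/setP => i; rewrite inE.
case: (boolP (i \in A0)) => iA0 /=; last by apply/esym; apply: contraNF iA0; apply: (subsetP sB).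
case: (boolP (i \in B)) => iB.
  apply/forall_inP => k kA0; rewrite (h1 i) //.
  by case: (boolP (k \in B)) => kB; [rewrite h1|apply: ltW; apply: h2].
apply/negP => /forall_inP /(_ b (subsetP sB _ bB)).
by rewrite (h1 b) ?(subsetP sB _ bB) // leNgt (h2 i).
Qed.

Lemma amin_ind (A0 B : {set 'I_n}) w m : (exists b, b \in B) -> B \subset A0 ->
  (forall i, i \in A0 -> i \in B -> w i = m) ->
  (forall i, i \in A0 -> i \notin B -> m < w i) -> amin A0 w = B.
Proof.
move=> [b bB] sB h1 h2; apply/setP => i; rewrite inE.
case: (boolP (i \in A0)) => iA0 /=; last by apply/esym; apply: contraNF iA0; apply: (subsetP sB).
case: (boolP (i \in B)) => iB.
  apply/forall_inP => k kA0; rewrite (h1 i) //.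
  by case: (boolP (k \in B)) => kB; [rewrite h1|apply: ltW; apply: h2].
apply/negP => /forall_inP /(_ b (subsetP sB _ bB)).
by rewrite (h1 b) ?(subsetP sB _ bB) // leNgt (h2 i).
Qed.

Lemma rmA_mem (E : {set 'I_n}) s i : (i \in rmA E s) = (i \in E) && notge (s i).
Proof. by rewrite inE. Qed.
Lemma rmC_mem (E : {set 'I_n}) s i : (i \in rmC E s) = (i \in E) && notle (s i).
Proof. by rewrite inE. Qed.

End Aux9.

Section Aux10.
Variables (R : realType) (n : nat) (mu : 'I_n -> option R) (nu : {set 'I_n} -> option R).

Definition Wv := [set k in Uv mu nu | [forall l in Uv mu nu, wv mu nu k <= wv mu nu l]].

Lemma W_sub : Wv \subset Uv mu nu.
Proof. by apply/subsetP => k; rewrite inE => /andP []. Qed.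

Lemma W_eq k : k \in Wv -> Wv = [set i in Uv mu nu | wv mu nu i == wv mu nu k].
Proof.
rewrite inE => /andP [kU /forall_inP hk]; apply/setP => i; rewrite [RHS]in_set /Wv [LHS]in_set.
case: (boolP (i \in Uv mu nu)) => iU //=; apply/forall_inP/eqP.
  by move=> h; apply/eqP; rewrite eq_le hk // h.
by move=> -> l lU; apply: hk.
Qed.

Lemma W_of g k : (forall i, i \in Uv mu nu -> g <= wv mu nu i) -> k \in Uv mu nu ->
  wv mu nu k = g -> k \in Wv.
Proof. by move=> hg kU ek; rewrite inE kU /=; apply/forall_inP => l lU; rewrite ek hg. Qed.

Lemma W_ne : (exists u, u \in Uv mu nu) -> exists k, k \in Wv.
Proof.
move=> h; have [k kU hk] := exists_argmin (wv mu nu) h.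
by exists k; rewrite inE kU; apply/forall_inP.
Qed.

End Aux10.

Lemma amax_mem (R : realType) n (A : {set 'I_n}) (w : 'I_n -> R) i :
  (i \in amax A w) = (i \in A) && [forall k in A, w k <= w i].
Proof. by rewrite inE. Qed.

Lemma amin_mem (R : realType) n (A : {set 'I_n}) (w : 'I_n -> R) i :
  (i \in amin A w) = (i \in A) && [forall k in A, w i <= w k].
Proof. by rewrite inE. Qed.

Lemma big_lb (R : realType) n (v : 'I_n -> R) : forall i, - (\sum_j `|v j|) - 1 < v i.
Proof.
move=> i; rewrite (bigD1 i) //=.
have h1 : 0 <= \sum_(j | j != i) `|v j| by apply: sumr_ge0.
have h2 : - v i <= `|v i| by rewrite ler_normr lexx orbT.
lra.
Qed.

Lemma nge_nle h : notge h || notle h.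
Proof. by case: h. Qed.

Theorem proposition5p1 (R : realType) (n : nat) (M N : {set {set 'I_n}})
    (mu : 'I_n -> option R) (nu : {set 'I_n} -> option R) :
  flag_matroid M N -> has_rank M 1 -> has_rank N n.-1 ->
  valuated_flag M N mu nu ->
  exists I : {set 'I_n}, forall X : pset R n,
    (exists x : 'I_n -> R, X = cell mu nu x) <->
    ((exists p, X p) /\
     exists F, face (flag_polytope M N) F /\
     exists s : 'I_n -> hside,
       X = fun p => F p /\ forall i, i \in I -> halfspace (s i) i p).
Proof.
move=> [hMm hNm _] hM hN [hmu hnu _].
have [i0 i0S] : exists i, i \in Sv mu.
  case: hMm => /set0Pn [B BM] _.
  have /cards1P [i eB] : #|B| == 1%N by rewrite hM.
  by exists i; rewrite inE; apply/eqP; apply/hmu; rewrite -eB.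
have n0 : (0 < n)%N := leq_ltn_trans (leq0n i0) (ltn_ord i0).
have [j0 j0T] : exists j, j \in Tv nu.
  case: hNm => /set0Pn [B BN] _.
  have [j eB] := card_compl1 n0 (hN B BN).
  by exists j; rewrite inE; apply/eqP; apply/(hnu _ (card_compl1' j)); rewrite -eB.
have eS : [set i | [set i] \in M] = Sv mu.
  apply/setP => i; rewrite !inE; apply/idP/idP => h.
    by apply/eqP; apply/hmu.
  by apply/hmu; apply/eqP.
have eT : [set j | ~:[set j] \in N] = Tv nu.
  apply/setP => j; rewrite !inE; apply/idP/idP => h.
    by apply/eqP; apply/(hnu _ (card_compl1' j)).
  by apply/(hnu _ (card_compl1' j)); apply/eqP.
have hP : flag_polytope M N = @DD R n (Sv mu) (Tv nu) by rewrite (@polytope_DD R n M N n0 hN) eS eT.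
have hSne : exists i, i \in Sv mu by exists i0.
have hTne : exists j, j \in Tv nu by exists j0.
set U := Uv mu nu; set W := Wv mu nu.
have hU : forall i, (i \in U) = (i \in Sv mu) && (i \in Tv nu).
  by move=> i; rewrite /U /Uv in_setI.
have WU : forall i, i \in W -> i \in U by move=> i; apply: (subsetP (W_sub mu nu)).
exists (U :\: W) => X; split.
- case=> x ->; rewrite (cell_DD _ _ _ n0).
  set A := Ax mu x; set C := Cx nu x.
  have [a aA] := Ax_ne x hSne; have [c cC] := Cx_ne x hTne.
  have sA := Ax_sub x hSne; have sC := Cx_sub x hTne.
  have [g [hg hAC]] := realize_inv x hSne hTne.
  split; first by exists (fun t => (t == a)%:R - (t == c)%:R); exact: DD_point.
  pose s := fun i => if i \in A then Hge else if i \in C then Hle else Heq.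
  case: (set_0Vmem (A :&: C)) => [AC0 | [k kAC]].
  + have dis : forall i, i \in A -> i \in C -> False.
      move=> i iA iC; have : i \in A :&: C by rewrite in_setI iA iC.
      by rewrite AC0 inE.
    exists (@DD R n A C); split.
      pose w := fun i : 'I_n => (i \in A)%:R - (i \in C)%:R : R.
      have e1 : amax (Sv mu) w = A.
        apply: (amax_ind (M := 1)) => //; first by exists a.
          move=> i _ iA; rewrite /w iA; case: (boolP (i \in C)) => iC.
            by case: (dis i iA iC).
          by rewrite subr0.
        move=> i _ /negPf iA; rewrite /w iA; case: (i \in C) => /=; lra.
      have e2 : amin (Tv nu) w = C.
        apply: (amin_ind (m := -1)) => //; first by exists c.
          move=> i _ iC; rewrite /w iC; case: (boolP (i \in A)) => iA.
            by case: (dis i iA iC).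
          by rewrite sub0r.
        move=> i _ /negPf iC; rewrite /w iC; case: (i \in A) => /=; lra.
      by exists w; rewrite hP (face_DD _ hSne hTne) e1 e2.
    exists s.
    change (@DD R n A C = fun p => @DD R n A C p /\ @sgn R n (U :\: W) s p).
    rewrite DD_sign; last by left.
    congr DD; apply/setP => i; rewrite in_setD ?rmA_mem ?rmC_mem /s.
      by case: (i \in A); rewrite /= andbF.
    case: (boolP (i \in C)) => iC; last by rewrite andbF.
    have -> : (i \in A) = false by apply/negP => iA; exact: dis i iA iC.
    by rewrite /= andbF.
  + have [kU ek] : k \in U /\ wv mu nu k = g.
      by move: kAC; rewrite hAC inE => /andP [kU /eqP ek].
    have kW : k \in W := @W_of R n mu nu g k hg kU ek.
    have eW : A :&: C = W by rewrite hAC /W (W_eq kW) ek.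
    have hW : forall i, (i \in A) && (i \in C) = (i \in W) by move=> i; rewrite -in_setI eW.
    have kA : k \in A by move: kAC; rewrite in_setI => /andP [].
    have kC : k \in C by move: kAC; rewrite in_setI => /andP [].
    exists (@DD R n (A :|: U) (C :|: U)); split.
      pose w := fun i : 'I_n =>
        (i \in Tv nu :\: (C :|: U))%:R - (i \in Sv mu :\: (A :|: U))%:R : R.
      have e1 : amax (Sv mu) w = A :|: U.
        apply: (amax_ind (M := 0)).
        - by exists a; rewrite in_setU aA.
        - by rewrite subUset sA /U /Uv subsetIl.
        - move=> i iS iAU; rewrite /w.
          have -> : (i \in Tv nu :\: (C :|: U)) = false.
            by rewrite in_setD in_setU hU iS /=; case: (i \in Tv nu); rewrite ?orbT ?andbF.
          have -> : (i \in Sv mu :\: (A :|: U)) = false by rewrite in_setD iAU.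
          by rewrite /= subrr.
        - move=> i iS iAU; rewrite /w.
          have -> : (i \in Tv nu :\: (C :|: U)) = false.
            rewrite in_setD; case: (boolP (i \in Tv nu)) => iT; last by rewrite andbF.
            by move: iAU; rewrite in_setU hU iS iT orbT.
          have -> : (i \in Sv mu :\: (A :|: U)) = true by rewrite in_setD iAU iS.
          rewrite /=; lra.
      have e2 : amin (Tv nu) w = C :|: U.
        apply: (amin_ind (m := 0)).
        - by exists c; rewrite in_setU cC.
        - by rewrite subUset sC /U /Uv subsetIr.
        - move=> i iT iCU; rewrite /w.
          have -> : (i \in Sv mu :\: (A :|: U)) = false.
            by rewrite in_setD in_setU hU iT /=; case: (i \in Sv mu); rewrite ?orbT ?andbF.
          have -> : (i \in Tv nu :\: (C :|: U)) = false by rewrite in_setD iCU.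
          by rewrite /= subrr.
        - move=> i iT iCU; rewrite /w.
          have -> : (i \in Sv mu :\: (A :|: U)) = false.
            rewrite in_setD; case: (boolP (i \in Sv mu)) => iS; last by rewrite andbF.
            by move: iCU; rewrite in_setU hU iS iT orbT.
          have -> : (i \in Tv nu :\: (C :|: U)) = true by rewrite in_setD iCU iT.
          rewrite /=; lra.
      by exists w; rewrite hP (face_DD _ hSne hTne) e1 e2.
    exists s.
    change (@DD R n A C = fun p => @DD R n (A :|: U) (C :|: U) p /\ @sgn R n (U :\: W) s p).
    rewrite DD_sign; last first.
      right; exists k; first by rewrite in_setI !in_setU kA kC.
      by rewrite in_setD kW.
    congr DD; apply/setP => i; rewrite in_setD ?rmA_mem ?rmC_mem in_setU in_setD /s.
      by move: (hW i); case: (i \in A); case: (i \in C); case: (i \in W); case: (i \in U).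
    by move: (hW i); case: (i \in A); case: (i \in C); case: (i \in W); case: (i \in U).
- case=> [[p Xp] [F [[w eF] [s eX]]]].
  rewrite hP (face_DD _ hSne hTne) in eF; subst F.
  set A' := amax (Sv mu) w in eX; set C' := amin (Tv nu) w in eX.
  have sA' : A' \subset Sv mu by apply/subsetP => i; rewrite amax_mem => /andP [].
  have sC' : C' \subset Tv nu by apply/subsetP => i; rewrite amin_mem => /andP [].
  have eX' : (A' :&: C' = set0 \/ exists2 k, k \in A' :&: C' & k \notin U :\: W) ->
      X = @DD R n (A' :\: rmA (U :\: W) s) (C' :\: rmC (U :\: W) s).
    by move=> h; rewrite eX; exact: (@DD_sign R n _ _ _ s h).
  set A'' := A' :\: rmA (U :\: W) s; set C'' := C' :\: rmC (U :\: W) s.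
  have sA'' : A'' \subset Sv mu := subset_trans (subsetDl _ _) sA'.
  have sC'' : C'' \subset Tv nu := subset_trans (subsetDl _ _) sC'.
  case: (set_0Vmem (A' :&: C')) => [e0 | [k0 k0AC]].
  + have eX2 := eX' (or_introl e0).
    rewrite eX2 in Xp; have [[a aA] [c cC]] := DD_nonempty Xp.
    pose g := - (\sum_j `|wv mu nu j|) - 1.
    have hg' : forall i, g < wv mu nu i := big_lb (wv mu nu).
    have hAC : A'' :&: C'' = [set i in U | wv mu nu i == g].
      apply/setP => i; apply/idP/idP.
        move=> iAC; have : i \in A' :&: C'.
          exact: (subsetP (setISS (subsetDl _ _) (subsetDl _ _)) _ iAC).
        by rewrite e0 inE.
      by rewrite inE => /andP [_ /eqP e]; have := hg' i; rewrite e ltxx.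
    have [x [eA eC]] := @realize R n mu nu A'' C'' g sA'' sC'' (ex_intro _ a aA)
      (ex_intro _ c cC) (fun i _ => ltW (hg' i)) hAC.
    by exists x; rewrite eX2 (cell_DD _ _ _ n0) eA eC.
  + have UAC : forall u, u \in U -> (u \in A') && (u \in C').
      move: k0AC; rewrite in_setI amax_mem amin_mem.
      case/andP => /andP [k0S /forall_inP h1] /andP [k0T /forall_inP h2] u.
      rewrite hU => /andP [uS uT].
      have eu : w u = w k0 by apply/eqP; rewrite eq_le h1 // h2.
      rewrite amax_mem amin_mem uS uT eu /=; apply/andP; split; apply/forall_inP.
        exact: h1.
      exact: h2.
    have ACU : forall u, (u \in A') && (u \in C') -> u \in U.
      move=> u /andP [uA uC]; rewrite hU; apply/andP; split.
        exact: (subsetP sA').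
      exact: (subsetP sC').
    have [k kW] : exists k, k \in W.
      apply: W_ne; exists k0; apply: ACU; by rewrite -in_setI.
    have kU := WU k kW.
    have eX2 : X = @DD R n A'' C''.
      apply: eX'; right; exists k; first by rewrite in_setI UAC.
      by rewrite in_setD kW.
    rewrite eX2 in Xp; have [[a aA] [c cC]] := DD_nonempty Xp.
    have hg : forall i, i \in U -> wv mu nu k <= wv mu nu i.
      by move: kW; rewrite /W /Wv inE => /andP [_ /forall_inP h].
    have hAC : A'' :&: C'' = [set i in U | wv mu nu i == wv mu nu k].
      rewrite -(W_eq kW); apply/setP => i.
      rewrite in_setI !in_setD rmA_mem rmC_mem !in_setD.
      have := UAC i; have := ACU i; have := WU i; have := nge_nle (s i).
      case: (notge (s i)); case: (notle (s i));
      case: (i \in A'); case: (i \in C'); case: (i \in W); case: (i \in U) => //=;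
      move=> H1 H2 H3 H4; first [ by move: H1 | by move: (H2 isT) | by move: (H3 isT) | by move: (H4 isT) ].
    have [x [eA eC]] := @realize R n mu nu A'' C'' (wv mu nu k) sA'' sC''
      (ex_intro _ a aA) (ex_intro _ c cC) hg hAC.
    by exists x; rewrite eX2 (cell_DD _ _ _ n0) eA eC.
Qed.
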